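(* For any $n\in\mathbb{N}$, the monoid $\mathrm{rps}_n$ has polynomial growth.
   Context: Let $\mathcal{A}_n=\{1<2<\cdots<n\}$. An rPS tableau is a finite (possibly empty) sequence of nonempty bottom-justified columns of boxes filled with positive integers, such that the entries of each column are weakly decreasing from top to bottom and the bottom entries of the columns form a strictly increasing sequence from left to right. Right insertion of a symbol $a$ into an rPS tableau $B$: if $a$ is strictly greater than every entry of the bottom row, append a new column consisting of $a$ at the right end; otherwise, let $z$ be the leftmost bottom-row entry with $z\geq a$ and put $a$ in a new box at the bottom of the column of $z$ (the previous entries of that column move up one box). For $w=w_1\cdots w_k$, $\mathfrak{R}_r(w)$ is obtained by starting with the empty tableau and right-inserting $w_1,\dots,w_k$ in order. The monoid $\mathrm{rps}_n$ is the quotient of the free monoid $\mathcal{A}_n^*$ by the congruence $u\equiv v\iff\mathfrak{R}_r(u)=\mathfrak{R}_r(v)$. For a monoid $M$ generated by a finite set $\Sigma$, the growth function $\gamma_M(N)$ is the number of elements of $M$ expressible as products of at most $N$ generators; $M$ has polynomial growth if $\gamma_M(N)$ is bounded above by $N^k$ for some $k$ (up to the usual equivalence of growth functions), a notion independent of the finite generating set. *)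

(* Defs.v *)
From mathcomp Require Import all_boot.
Set Implicit Arguments. Unset Strict Implicit. Unset Printing Implicit Defensive.

(* An rPS tableau is a sequence of columns (left to right); each column is a
   seq nat listed from BOTTOM to TOP (so the head of a column is its bottom
   entry).  Entries weakly decrease from top to bottom, i.e. a column listed
   bottom-to-top is weakly increasing; bottom entries strictly increase left
   to right. *)
Definition column := seq nat.
Definition tableau := seq column.

Definition is_rPS (B : tableau) : Prop :=
  all (fun c => (c != [::]) && sorted leq c) B /\
  sorted ltn [seq head 0 c | c <- B].

Fixpoint rins (B : tableau) (a : nat) : tableau :=
  match B with
  | [::] => [:: [:: a]]
  | c :: B' => if a <= head 0 c then (a :: c) :: B' else c :: rins B' a
  end.

Definition Rr (w : seq nat) : tableau := foldl rins [::] w.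

Definition word_over (n : nat) (w : seq nat) : bool :=
  all (fun a => (1 <= a) && (a <= n)) w.

Definition rps_equiv (u v : seq nat) : Prop := Rr u = Rr v.

Fixpoint words (n m : nat) : seq (seq nat) :=
  match m with
  | 0 => [:: [::]]
  | m'.+1 => [seq a :: w | a <- iota 1 n, w <- words n m']
  end.

Definition words_upto (n N : nat) : seq (seq nat) :=
  flatten [seq words n m | m <- iota 0 N.+1].

(* Growth function of rps_n w.r.t. its natural generating set A_n: the number
   of elements of rps_n expressible as products of at most N generators.
   Elements of rps_n are classes of rps_equiv, which are in bijection with
   the values of Rr, so we count distinct values Rr w over such words. *)
Definition gamma_rps (n N : nat) : nat :=
  size (undup [seq Rr w | w <- words_upto n N]).

(* Polynomial growth: gamma(N) <= C * N^k for all N >= 1 (this is exactly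
   gamma being dominated by N |-> N^k in the usual growth preorder). *)
Definition polynomial_growth (gamma : nat -> nat) : Prop :=
  exists k C : nat, forall N : nat, 0 < N -> gamma N <= C * N ^ k.

(* Main.v *)
Require Import Defs.
From mathcomp Require Import all_boot.
Set Implicit Arguments. Unset Strict Implicit.

Lemma path_rins (a : nat) (B : tableau) (x : nat) :
  x < a -> path ltn x (map (head 0) B) -> path ltn x (map (head 0) (rins B a)).
Proof.
elim: B x => [|c B IH] x xa /=; first by rewrite xa.
case/andP=> xc pB.
case: ifP => ac /=.
  rewrite xa /=.
  case: B pB {IH} => [|c' B'] //= /andP [cc' ->].
  by rewrite (leq_ltn_trans ac cc').
by rewrite xc /= IH // ltnNge ac.
Qed.

Lemma sorted_rins (a : nat) (B : tableau) :
  all (sorted leq) B -> all (sorted leq) (rins B a).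
Proof.
elim: B => [|c B IH] //= /andP [sc sB].
case: ifP => ac /=.
  rewrite sB andbT.
  by case: c sc ac => [|y c] //= -> ->.
by rewrite sc IH.
Qed.

Lemma bound_rins (n a : nat) (B : tableau) : a <= n ->
  all (all (fun x => x <= n)) B -> all (all (fun x => x <= n)) (rins B a).
Proof.
move=> an; elim: B => [|c B IH] /=; first by rewrite an.
case/andP=> bc bB.
case: ifP => ac /=; first by rewrite an bc bB.
by rewrite bc IH.
Qed.

Lemma size_rins (a : nat) (B : tableau) :
  size (flatten (rins B a)) = (size (flatten B)).+1.
Proof.
elim: B => [|c B IH] //=.
case: ifP => ac /=; rewrite !size_cat //= IH.
by rewrite addnS.
Qed.

Definition Inv (n : nat) (B : tableau) :=
  [/\ all (sorted leq) B, all (all (fun x => x <= n)) B &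
      path ltn 0 (map (head 0) B)].

Lemma Inv_foldl n (w : seq nat) (B : tableau) :
  word_over n w -> Inv n B ->
  Inv n (foldl rins B w) /\
  size (flatten (foldl rins B w)) = size (flatten B) + size w.
Proof.
elim: w B => [|a w IH] B /=; first by rewrite addn0.
case/andP=> /andP [a1 an] ww [s1 s2 s3].
have [] := IH (rins B a) ww.
  by split; [apply: sorted_rins | apply: bound_rins | apply: path_rins].
by move=> I ->; split=> //; rewrite size_rins addSnnS.
Qed.

Lemma Inv_Rr n w : word_over n w ->
  Inv n (Rr w) /\ size (flatten (Rr w)) = size w.
Proof. by move=> ww; have [] := @Inv_foldl n w [::] ww. Qed.

Lemma Inv_size n B : Inv n B -> size B <= n.
Proof.
case=> _ hb hp.
have u : uniq (0 :: map (head 0) B).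
  by apply: (sorted_uniq ltn_trans ltnn).
suff h : {subset (0 :: map (head 0) B) <= iota 0 n.+1}.
  by have := uniq_leq_size u h; rewrite /= size_map size_iota ltnS.
move=> x; rewrite inE mem_iota add0n /=.
case/orP=> [/eqP -> //|/mapP [c cB ->]].
have := allP hb c cB; case: c {cB} => [|y c] //= /andP [yn _].
by rewrite ltnS.
Qed.

Definition enc (n : nat) (T : tableau) : nat * seq (seq nat) :=
  (size T, [seq [seq count_mem i (nth [::] T j) | i <- iota 0 n.+1] | j <- iota 0 n]).

Lemma col_eq n (c c' : seq nat) : sorted leq c -> sorted leq c' ->
  all (fun x => x <= n) c -> all (fun x => x <= n) c' ->
  [seq count_mem i c | i <- iota 0 n.+1] = [seq count_mem i c' | i <- iota 0 n.+1] ->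
  c = c'.
Proof.
move=> s s' b b' /eq_in_map e.
apply: (sorted_eq leq_trans anti_leq s s').
apply/allP => x; rewrite mem_cat /= => hx.
have xn : x <= n by case/orP: hx => hx; [exact: (allP b) | exact: (allP b')].
by rewrite e // mem_iota add0n ltnS.
Qed.

Lemma enc_inj n T T' : Inv n T -> Inv n T' -> enc n T = enc n T' -> T = T'.
Proof.
move=> I I' [es /eq_in_map em].
have sn := Inv_size I.
case: I I' => [s1 s2 s3] [t1 t2 t3].
apply: (eq_from_nth (x0 := [::]) es) => j jT.
have jn : j \in iota 0 n by rewrite mem_iota add0n (leq_trans jT sn).
have jT' : j < size T' by rewrite -es.
have := em j jn => /= e.
apply: (col_eq _ _ _ _ e).
- exact: (allP s1 _ (mem_nth _ jT)).
- exact: (allP t1 _ (mem_nth _ jT')).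
- exact: (allP s2 _ (mem_nth _ jT)).
- exact: (allP t2 _ (mem_nth _ jT')).
Qed.

Fixpoint vecs {A : Type} (m : nat) (s : seq A) : seq (seq A) :=
  match m with
  | 0 => [:: [::]]
  | m'.+1 => [seq x :: v | x <- s, v <- vecs m' s]
  end.

Lemma size_vecs {A : Type} m (s : seq A) : size (vecs m s) = size s ^ m.
Proof. by elim: m => [|m IH] //=; rewrite size_allpairs IH expnS. Qed.

Lemma mem_vecs {A : eqType} m (s : seq A) v :
  size v = m -> all (fun x => x \in s) v -> v \in vecs m s.
Proof.
elim: m v => [|m IH] [|x v] //= [sv] /andP [xs vs].
by apply: allpairs_f => //; apply: IH.
Qed.

Lemma words_spec n m w : w \in words n m -> size w = m /\ word_over n w.
Proof.
elim: m w => [|m IH] w /=; first by rewrite inE => /eqP ->.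
case/allpairsP => [[a w'] [/= ha hw ->]].
have [<- ww] := IH _ hw.
by split=> //=; rewrite ww andbT -(ltnS a n) -(add1n n) -mem_iota.
Qed.

Lemma words_upto_spec n N w : w \in words_upto n N -> size w <= N /\ word_over n w.
Proof.
case/flatten_mapP => m; rewrite mem_iota add0n ltnS => mN /words_spec [-> ->].
by [].
Qed.

Lemma size_nth_flatten (T : tableau) j : size (nth [::] T j) <= size (flatten T).
Proof.
elim: T j => [|c T IH] [|j] //=; rewrite size_cat ?leq_addr //.
exact: leq_trans (IH j) (leq_addl _ _).
Qed.

Lemma exp_mono m p e : m <= p -> m ^ e <= p ^ e.
Proof. by move=> h; elim: e => [|e IH] //; rewrite !expnS leq_mul. Qed.

Theorem theorem4p3 (n : nat) : polynomial_growth (gamma_rps n).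
Proof.
exists ((n.+1) * n), (n.+1 * 2 ^ (n.+1 * n)) => N N0.
rewrite /gamma_rps.
set S := undup _.
set L := [seq (s, M) | s <- iota 0 n.+1, M <- vecs n (vecs n.+1 (iota 0 N.+1))].
have hS : forall T, T \in S -> Inv n T /\ size (flatten T) <= N.
  move=> T; rewrite mem_undup => /mapP [w /words_upto_spec [wN ww] ->].
  by have [I ->] := Inv_Rr ww.
have u : uniq (map (enc n) S).
  rewrite map_inj_in_uniq ?undup_uniq // => T T' /hS [I _] /hS [I' _].
  exact: enc_inj.
have sub : {subset map (enc n) S <= L}.
  move=> e /mapP [T /hS [I sN] ->].
  apply: allpairs_f; first by rewrite mem_iota add0n ltnS Inv_size.
  apply: mem_vecs; first by rewrite size_map size_iota.
  apply/allP => r /mapP [j _ ->].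
  apply: mem_vecs; first by rewrite size_map size_iota.
  apply/allP => x /mapP [i _ ->].
  rewrite mem_iota add0n ltnS.
  exact: leq_trans (count_size _ _) (leq_trans (size_nth_flatten T j) sN).
have := uniq_leq_size u sub.
rewrite size_map size_allpairs size_iota !size_vecs size_iota -expnM => h.
apply: (leq_trans h); rewrite -mulnA leq_mul2l; apply/orP; right.
rewrite -expnMn; apply: exp_mono.
by rewrite mul2n -addnn -addn1 leq_add2l.
Qed.
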